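(* Let $X$ be a real Hilbert space with inner product $\langle\cdot,\cdot\rangle$ and norm $|x|=\sqrt{\langle x,x\rangle}$, let $G:X\to[0,\infty)$ and $Z=\{z\in X:G(z)\le1\}$. Assume that the gradient $\nabla G(x)$ exists for every $x\in X$ and that there are positive constants $\lambda,c$ and a continuous increasing function $\mu:[0,\infty)\to[0,\infty)$ with $\mu(0)=0$, $\lim_{s\to\infty}\mu(s)=\infty$, such that (i) $G(x)=1\Rightarrow|\nabla G(x)|\ge c$ for all $x\in X$; (ii) $|\nabla G(x)-\nabla G(y)|\le\mu(|x-y|)$ for all $x,y\in Z$; (iii) $\langle\nabla G(x)-\nabla G(z),x-z\rangle\ge-\lambda|x-z|^2$ for all $x\in\partial Z$, $z\in Z$. Let $r=c/\lambda$. Then for all $x\in\partial Z$ and $z\in Z$, $$\langle\nabla G(x),x-z\rangle+\frac{|\nabla G(x)|}{2r}|x-z|^2\ge0.$$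
   Context: The gradient $\nabla G(x)\in X$ is defined by $\langle\nabla G(x),y\rangle=\lim_{t\to0}\frac1t(G(x+ty)-G(x))$ for all $y\in X$. $\partial Z$ denotes the boundary of $Z$. *)

(* Defs.v *)
From HB Require Import structures.
From mathcomp Require Import all_boot all_order all_algebra.
From mathcomp Require Import all_classical all_reals all_analysis.
Set Implicit Arguments. Unset Strict Implicit. Unset Printing Implicit Defensive.
Import Order.TTheory GRing.Theory Num.Theory.
Import numFieldNormedType.Exports.
Local Open Scope classical_set_scope.
Local Open Scope ring_scope.

(* A real Hilbert space is represented as a complete normed space X over R
   together with a real inner product [ip] whose induced norm is the norm
   of X, i.e. |x| = sqrt <x,x>. *)
Definition is_hilbert_inner (R : realType) (X : completeNormedModType R)
  (ip : X -> X -> R) : Prop :=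
  [/\ (forall x y, ip x y = ip y x),
      (forall a x y z, ip (a *: x + y) z = a * ip x z + ip y z),
      (forall x, 0 <= ip x x),
      (forall x, ip x x = 0 -> x = 0) &
      (forall x, `|x| = Num.sqrt (ip x x))].

Definition is_gradient (R : realType) (X : completeNormedModType R)
  (ip : X -> X -> R) (G : X -> R) (x g : X) : Prop :=
  forall y : X, (fun t : R => (G (x + t *: y) - G x) / t) @ 0^' --> ip g y.

Definition boundary (T : topologicalType) (A : set T) : set T :=
  closure A `\` interior A.

(* Main.v *)
Require Import Defs.
From HB Require Import structures.
From mathcomp Require Import all_boot all_order all_algebra.
From mathcomp Require Import all_classical all_reals all_analysis.
From mathcomp Require Import ring lra.
Import Order.TTheory GRing.Theory Num.Theory.
Import numFieldNormedType.Exports.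
Local Open Scope classical_set_scope.
Local Open Scope ring_scope.

Set Implicit Arguments. Unset Strict Implicit. Unset Printing Implicit Defensive.

Section OneD.
Variable R : realType.

Definition Der (f : R -> R) (t L : R) := forall eps, 0 < eps ->
  exists2 e : R, 0 < e & forall h, h != 0 -> `|h| < e ->
    `|(f (t + h) - f t) / h - L| < eps.

Lemma Der_pos f t L : Der f t L -> 0 < L ->
  exists2 e : R, 0 < e & forall h, 0 < h -> h < e ->
    f t < f (t + h) /\ f (t - h) < f t.
Proof.
move=> D L0; have [e e0 He] := D L L0; exists e => // h h0 he; split.
- have := He h; rewrite gt_eqF // gtr0_norm // => /(_ isT he).
  rewrite ltr_norml => /andP[h1 _].
  have q0 : 0 < (f (t + h) - f t) / h.
    by move: h1; set Q := (f (t + h) - f t) / h; lra.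
  have := mulr_gt0 q0 h0; rewrite divfK ?gt_eqF //; lra.
- have := He (- h); rewrite oppr_eq0 gt_eqF // normrN gtr0_norm //.
  move=> /(_ isT he); rewrite ltr_norml => /andP[h1 _].
  have q0 : 0 < (f (t + - h) - f t) / - h.
    by move: h1; set Q := (f (t + - h) - f t) / - h; lra.
  have := mulr_gt0 q0 h0; rewrite invrN mulrN mulNr divfK ?gt_eqF //; lra.
Qed.

Lemma Der_opp f t L : Der f t L -> Der (fun s => - f s) t (- L).
Proof.
move=> D eps he; have [e e0 He] := D eps he; exists e => // h h0 hh.
rewrite (_ : (- f (t + h) - - f t) / h - - L = - ((f (t + h) - f t) / h - L)); last by ring.
by rewrite normrN; apply: He.
Qed.

Lemma Der_neg f t L : Der f t L -> L < 0 ->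
  exists2 e : R, 0 < e & forall h, 0 < h -> h < e -> f (t + h) < f t.
Proof.
move=> D L0; have [e e0 He] := Der_pos (Der_opp D) (ltac:(lra) : 0 < - L).
exists e => // h h0 he; have [] := He h h0 he; lra.
Qed.

Lemma Der_lip f t L : Der f t L ->
  exists2 e : R, 0 < e & forall h, `|h| < e -> `|f (t + h) - f t| <= (`|L| + 1) * `|h|.
Proof.
move=> D; have [e e0 He] := D 1 ltr01; exists e => // h he.
have [->|h0] := eqVneq h 0; first by rewrite addr0 subrr normr0 mulr0.
have := He h h0 he => H1.
have : `|(f (t + h) - f t) / h| <= `|L| + 1.
  have := ler_normD ((f (t + h) - f t) / h - L) L; rewrite subrK.
  have := ltW H1; lra.
rewrite normrM normrV ?unitfE // => H2.
have hp : 0 < `|h| by rewrite normr_gt0.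
by rewrite -ler_pdivrMr.
Qed.

Lemma pos_min (a b : R) : 0 < a -> 0 < b -> exists h, [/\ 0 < h, h <= a & h <= b].
Proof.
move=> a0 b0; case: (leP a b) => ab; first by exists a; split => //; lra.
by exists b; split => //; lra.
Qed.

Lemma Der_cont f : (forall t, exists L, Der f t L) -> continuous f.
Proof.
move=> H t; apply/cvgrPdist_lt => eps he.
have [L D] := H t; have [e e0 He] := Der_lip D.
have K0 : 0 < `|L| + 1 by rewrite ltr_wpDl.
have [d [d0 d1 d2]] := pos_min e0 (divr_gt0 (divr_gt0 he K0) (ltr0Sn _ 1)).
apply/nbhs_ballP; exists d => //.
move=> y; rewrite /ball /= => hy.
have hy1 : `|t - y| < e by lra.
have hy2 : `|t - y| < eps / (`|L| + 1) / 2 by lra.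
have := He (y - t); rewrite (_ : t + (y - t) = y); last by rewrite addrC subrK.
rewrite distrC in hy1 hy2; move=> /(_ hy1) H1; rewrite distrC.
apply: (le_lt_trans H1).
rewrite mulrC -ltr_pdivlMr //.
apply: (lt_le_trans hy2); rewrite ler_pdivrMr // ler_pMr ?divr_gt0 //.
lra.
Qed.

Lemma Der_comp_opp f a t L : Der f (a - t) L -> Der (fun s => f (a - s)) t (- L).
Proof.
move=> D eps he; have [e e0 He] := D eps he; exists e => // h h0 hh.
have := He (- h); rewrite oppr_eq0 h0 normrN => /(_ isT hh).
rewrite (_ : a - (t + h) = a - t + - h); last by ring.
move=> H; rewrite (_ : (f (a - t + - h) - f (a - t)) / h - - L = - ((f (a - t + - h) - f (a - t)) / - h - L)); first by rewrite normrN.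
rewrite invrN; ring.
Qed.

Lemma Der_sub_lin f t L K : Der f t L -> Der (fun s => f s - s * K) t (L - K).
Proof.
move=> D eps he; have [e e0 He] := D eps he; exists e => // h h0 hh.
rewrite (_ : (f (t + h) - (t + h) * K - (f t - t * K)) / h - (L - K)
   = (f (t + h) - f t) / h - L); first exact: He.
rewrite (_ : f (t + h) - (t + h) * K - (f t - t * K) = (f (t + h) - f t) - K * h); last by ring.
rewrite mulrBl mulfK //; ring.
Qed.

Lemma cont_ind (f : R -> R) (a b c0 : R) : a <= b ->
  (forall t, exists L, Der f t L) -> f a <= c0 ->
  (forall s, a <= s -> s < b -> (forall s', a <= s' -> s' <= s -> f s' <= c0) ->
     exists2 e : R, 0 < e & forall h, 0 < h -> h < e -> f (s + h) <= c0) ->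
  forall s, a <= s -> s <= b -> f s <= c0.
Proof.
move=> ab HD fa Hstep.
pose A := [set s | a <= s <= b /\ forall s', a <= s' -> s' <= s -> f s' <= c0].
have Aa : A a.
  split; first by rewrite lexx ab.
  by move=> s' h1 h2; have -> : s' = a by apply/eqP; rewrite eq_le h1 h2.
have ubA : ubound A b by move=> y [/andP[]].
have hsA : has_sup A by split; [exists a | exists b].
set sg := sup A.
have asg : a <= sg by apply: sup_upper_bound.
have sgb : sg <= b by apply: ge_sup => //; exists a.
have below : forall s', a <= s' -> s' < sg -> f s' <= c0.
  move=> s' h1 h2.
  have [y [_ Hy] ly] := sup_adherent (ltac:(lra) : 0 < sg - s') hsA.
  apply: Hy => //; rewrite -/sg in ly; lra.
have atsg : f sg <= c0.
  have [<-|asg'] := eqVneq a sg; first exact: fa.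
  have asg2 : a < sg by rewrite lt_neqAle asg' asg.
  rewrite leNgt; apply/negP => hc.
  have [L D] := HD sg; have [e e0 He] := Der_lip D.
  have K0 : 0 < `|L| + 1 by rewrite ltr_wpDl.
  have [h' [h'0 h'1 h'2]] := pos_min (divr_gt0 e0 (ltr0Sn _ 1)) (ltac:(lra) : 0 < sg - a).
  have [h [h0 h4 h3]] := pos_min h'0 (divr_gt0 (divr_gt0 (ltac:(lra) : 0 < f sg - c0) K0) (ltr0Sn _ 1)).
  have h1 : h <= e / 2 by lra.
  have h2 : h <= sg - a by lra.
  have := He (- h); rewrite normrN gtr0_norm // => /(_ ltac:(lra)).
  have := below (sg + - h) ltac:(lra) ltac:(lra).
  have : (`|L| + 1) * h <= (f sg - c0) / 2.
    rewrite mulrC -ler_pdivlMr // mulrAC; exact: h3.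
  move=> H1 H2; rewrite ler_norml => /andP[H3 _]; lra.
have sgA : A sg.
  split; first by rewrite asg sgb.
  move=> s' h1 h2; have [->|ne] := eqVneq s' sg; first by [].
  by apply: below => //; rewrite lt_neqAle ne h2.
have sgb2 : sg = b.
  apply/eqP; rewrite eq_le sgb /=; rewrite leNgt; apply/negP => lt.
  have [e e0 He] := Hstep sg asg lt (sgA.2).
  have [h [h0 h1 h2]] := pos_min (divr_gt0 e0 (ltr0Sn _ 1)) (ltac:(lra) : 0 < b - sg).
  have : A (sg + h).
    split; first by apply/andP; split; lra.
    move=> s' s1 s2; have [le|gt] := leP s' sg; first exact: sgA.2.
    have := He (s' - sg) ltac:(lra) ltac:(lra).
    by rewrite addrC subrK.
  move=> /sup_upper_bound => /(_ hsA); rewrite -/sg; lra.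
move=> s h1 h2; apply: sgA.2 => //; by rewrite sgb2.
Qed.

End OneD.

Unset Implicit Arguments.

Lemma real_final (R : realType) (c l r' D A nu dl gm hm q ih ph pe pd th : R) :
  0 < c -> 0 < l -> 0 < r' -> l * r' < c -> 0 < D -> 0 <= nu -> 0 < dl ->
  c <= gm -> c <= hm -> 0 <= th ->
  q = gm / r' * (A + nu ^+ 2) ->
  2 * (A + nu ^+ 2) = r' ^+ 2 + nu ^+ 2 - dl ^+ 2 ->
  r' <= dl + nu ->
  ih = hm * ph -> pe = dl^-1 * A -> ph = pe - pd -> - (th * nu) <= pd ->
  q <= l * nu ^+ 2 -> - l * nu ^+ 2 <= - (q - ih) ->
  th < (1 - l * r' / c) * (D / (2 * r')) ^+ 2 ->
  dl <= r' - D / 2 -> False.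
Proof.
move=> c0 l0 r0 lr D0 nu0 dl0 gmc hmc th0 qE AU ue ihE peE phE pdE W H3 thl dlr.
have nuD : D / 2 <= nu by lra.
have nup : 0 < nu by lra.
have AUp : 0 < A + nu ^+ 2.
  have : dl ^+ 2 < r' ^+ 2 by rewrite ltrXn2r // ?ltW //; lra.
  have := sqr_ge0 nu; lra.
have a1 : gm * (A + nu ^+ 2) <= l * r' * nu ^+ 2.
  have : q * r' <= l * nu ^+ 2 * r' by rewrite ler_pM2r.
  rewrite qE mulrAC divfK ?gt_eqF //; lra.
have a2 : c * (A + nu ^+ 2) <= l * r' * nu ^+ 2.
  apply: le_trans a1; rewrite ler_pM2r //.
have b1 : c * A <= r' * ih.
  have : r' * q = gm * (A + nu ^+ 2) by rewrite qE; field; rewrite gt_eqF.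
  have : c * (A + nu ^+ 2) <= gm * (A + nu ^+ 2) by rewrite ler_pM2r.
  have : l * r' * nu ^+ 2 <= c * nu ^+ 2 by rewrite ler_pM2r ?exprn_gt0 // ltW.
  have : r' * (q - ih) <= r' * (l * nu ^+ 2) by rewrite ler_pM2l //; lra.
  nra.
have Aneg : c * A <= (l * r' - c) * nu ^+ 2 by nra.
have thl2 : th * (4 * c * r' ^+ 2) < (c - l * r') * D ^+ 2.
  move: thl; rewrite (_ : (1 - l * r' / c) * (D / (2 * r')) ^+ 2 = (c - l * r') * D ^+ 2 / (4 * c * r' ^+ 2)).
    by rewrite ltr_pdivlMr // !mulr_gt0.
  by field; rewrite ?gt_eqF.
have d1 : th * nu * r' * dl <= th * nu * r' * r'.
  by rewrite ler_wpM2l ?mulr_ge0 //; [lra | lra].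
have clr : 0 < c - l * r' by lra.
have d2 : th * (4 * c * r' ^+ 2) * nu < (c - l * r') * D ^+ 2 * nu by rewrite ltr_pM2r.
have d3 : (c - l * r') * D ^+ 2 * nu <= (c - l * r') * D * (2 * nu ^+ 2).
  rewrite expr2 -!mulrA ler_pM2l // ler_pM2l //; nra.
have d4 : (c - l * r') * D * (2 * nu ^+ 2) <= 2 * D * (- (c * A)).
  have : (c - l * r') * nu ^+ 2 <= - (c * A) by lra.
  move=> h; have := ler_pM2l (mulr_gt0 (ltr0Sn _ 1) D0) ; move=> <-. 
  move: h; set z := nu ^+ 2; nra.
have d5 : th * r' ^+ 2 * nu < - A * D / 2.
  have h1 : th * (4 * c * r' ^+ 2) * nu < 2 * D * (- (c * A)) by lra.
  have h2 : 4 * c * (th * r' ^+ 2 * nu) < 4 * c * (- A * D / 2).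
    move: h1; rewrite (_ : th * (4 * c * r' ^+ 2) * nu = 4 * c * (th * r' ^+ 2 * nu)); last by ring.
    by rewrite (_ : 2 * D * - (c * A) = 4 * c * (- A * D / 2)); last by field.
  by move: h2; rewrite ltr_pM2l ?mulr_gt0.
have Ap : 0 < - A.
  have hh : 0 < (c - l * r') * nu ^+ 2 by rewrite mulr_gt0 // exprn_gt0.
  have cA : c * A < 0 by lra.
  by move: cA; rewrite pmulr_rlt0 // oppr_gt0.
have d6 : - A * D / 2 <= - A * (r' - dl).
  rewrite -mulrA ler_pM2l //; lra.
have e1 : dl * pe = A by rewrite peE mulrA mulfV ?gt_eqF // mul1r.
have e2 : r' * dl * ph < A * dl.
  have : r' * dl * ph <= r' * A + r' * dl * th * nu.
    rewrite phE; have : dl * (pe - pd) <= A + dl * th * nu by nra.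
    move=> h; have := ler_pM2l r0; move=> <-; move: h; rewrite !mulrA; nra.
  have : th * nu * r' * dl < - A * (r' - dl) by nra.
  nra.
have e3 : r' * ph < A.
  by move: e2; rewrite (mulrC r') -mulrA (mulrC A) ltr_pM2l.
have e4 : r' * ih <= c * (r' * ph).
  rewrite ihE mulrCA; rewrite ler_wnM2r //; nra.
nra.
Qed.

Arguments real_final {R c l r' D A nu dl gm hm q ih ph pe pd th}.

Lemma real_kkt (R : realType) (Ds dl m sg ep th n : R) :
  0 < Ds -> Ds <= dl -> dl < Ds + ep -> 0 < ep -> ep <= Ds / 2 -> 0 < sg ->
  sg <= Ds * th / 2 -> ep <= sg * th / 8 -> th <= m -> 0 < th -> Ds <= n ->
  n ^+ 2 = sg ^+ 2 - 2 * (sg * (dl * m / 2)) + dl ^+ 2 -> False.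
Proof.
move=> D0 Ddl dlD ep0 epD sg0 sgD epsg thm th0 Dn nE.
have dl0 : 0 < dl by lra.
have h1 : (dl - ep) ^+ 2 < Ds ^+ 2.
  rewrite (ltr_pXn2r (ltn0Sn 1)) ?nnegrE; lra.
have h2 : Ds ^+ 2 <= n ^+ 2.
  rewrite (ler_pXn2r (ltn0Sn 1)) ?nnegrE; lra.
have h3 : sg * dl * m < sg ^+ 2 + 2 * ep * dl.
  move: h1 h2; rewrite nE !expr2; nra.
have h4 : sg * th * dl <= sg * dl * m.
  have : sg * dl * th <= sg * dl * m by rewrite ler_pM2l ?mulr_gt0.
  lra.
have h5 : sg ^+ 2 <= sg * (dl * th / 2).
  rewrite expr2 ler_pM2l //.
  have : Ds * th <= dl * th by rewrite ler_pM2r.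
  lra.
have h6 : 2 * ep * dl <= sg * th * dl / 4.
  have : ep * dl <= sg * th / 8 * dl by rewrite ler_pM2r.
  lra.
have : sg * th * dl > 0 by rewrite !mulr_gt0.
lra.
Qed.

Arguments real_kkt {R Ds dl m sg ep th n}.

Section Main.
Variables (R : realType) (X : completeNormedModType R)
  (ip : X -> X -> R) (G : X -> R) (gradG : X -> X)
  (lambda c : R) (mu : R -> R).
Hypothesis hip : is_hilbert_inner ip.
Hypothesis hgrad : forall x, is_gradient ip G x (gradG x).
Hypothesis hl : 0 < lambda.
Hypothesis hc : 0 < c.
Hypothesis hmuc : {within `[0, +oo[, continuous mu}.
Hypothesis hmu0 : mu 0 = 0.
Hypothesis hi : forall x, G x = 1 -> c <= `|gradG x|.
Hypothesis hii : forall x y, G x <= 1 -> G y <= 1 ->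
     `|gradG x - gradG y| <= mu `|x - y|.
Hypothesis hiii : forall x z, boundary [set w | G w <= 1] x -> G z <= 1 ->
     ip (gradG x - gradG z) (x - z) >= - lambda * `|x - z| ^+ 2.

Lemma ipC x y : ip x y = ip y x.
Proof. by case: hip. Qed.
Lemma ipZDl a x y z : ip (a *: x + y) z = a * ip x z + ip y z.
Proof. by case: hip. Qed.
Lemma ip0l z : ip 0 z = 0.
Proof.
have := ipZDl 1 0 0 z; rewrite scale1r addr0 mul1r => h; lra.
Qed.
Lemma ipDl x y z : ip (x + y) z = ip x z + ip y z.
Proof. by have := ipZDl 1 x y z; rewrite scale1r mul1r. Qed.
Lemma ipZl a x z : ip (a *: x) z = a * ip x z.
Proof. by rewrite -[a *: x]addr0 ipZDl ip0l addr0. Qed.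
Lemma ipNl x z : ip (- x) z = - ip x z.
Proof. by rewrite -scaleN1r ipZl mulN1r. Qed.
Lemma ipBl x y z : ip (x - y) z = ip x z - ip y z.
Proof. by rewrite ipDl ipNl. Qed.
Lemma ipDr x y z : ip z (x + y) = ip z x + ip z y.
Proof. by rewrite ipC ipDl !(ipC z). Qed.
Lemma ipZr a x z : ip z (a *: x) = a * ip z x.
Proof. by rewrite ipC ipZl ipC. Qed.
Lemma ipNr x z : ip z (- x) = - ip z x.
Proof. by rewrite ipC ipNl ipC. Qed.
Lemma ipBr x y z : ip z (x - y) = ip z x - ip z y.
Proof. by rewrite ipDr ipNr. Qed.
Lemma ip0r z : ip z 0 = 0.
Proof. by rewrite ipC ip0l. Qed.
Lemma ipxx x : ip x x = `|x| ^+ 2.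
Proof.
case: hip => _ _ hpos _ hn; rewrite hn sqr_sqrtr //.
Qed.
Lemma ip_le x y : ip x y <= `|x| * `|y|.
Proof.
have h := ler_normD x y.
have h1 : `|x + y| ^+ 2 <= (`|x| + `|y|) ^+ 2.
  by rewrite lerXn2r // ?nnegrE // addr_ge0.
move: h1; rewrite -ipxx ipDl !ipDr (ipC y x) !ipxx => h1.
nra.
Qed.
Lemma ip_ge x y : - (`|x| * `|y|) <= ip x y.
Proof. by rewrite lerNl -ipNl -(normrN x) ip_le. Qed.

Lemma DerG w d t : Der (fun s => G (w + s *: d)) t (ip (gradG (w + t *: d)) d).
Proof.
move=> eps he.
move: (hgrad (w + t *: d) d) => /cvgrPdist_lt /(_ _ he).
move=> /nbhs_ballP [e /= e0 He]; exists e => // h h0 hh.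
rewrite distrC scalerDl addrA; apply: He => //.
by rewrite /ball /= sub0r normrN.
Qed.

Lemma mu_small eps : 0 < eps ->
  exists2 s0 : R, 0 < s0 & forall s, 0 <= s -> s <= s0 -> mu s <= eps.
Proof.
move=> he.
have A0 : `[0, +oo[%classic (0 : R) by rewrite /= in_itv /= lexx.
have := (proj1 (subspace_continuousP _ _) hmuc) 0 A0.
move=> /cvgrPdist_lt /(_ _ he) /nbhs_ballP [e /= e0 He].
exists (e / 2); first by rewrite divr_gt0.
move=> s s0 se.
have hs : ball 0 e s by rewrite /ball /= sub0r normrN ger0_norm //; lra.
have hs2 : s \in `[0, +oo[ by rewrite in_itv /= s0.
have := He s hs hs2; rewrite /from_subspace hmu0 sub0r normrN => H.
exact: (le_trans (ler_norm _) (ltW H)).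
Qed.


Lemma norm_le_add (a b : X) : `|b| <= `|a| + `|b - a|.
Proof. by have := ler_normD a (b - a); rewrite addrC subrK. Qed.

Lemma ip_gradB w w' d : G w <= 1 -> G w' <= 1 ->
  ip (gradG w') d <= ip (gradG w) d + mu `|w' - w| * `|d|.
Proof.
move=> Gw Gw'.
have -> : gradG w' = gradG w + (gradG w' - gradG w) by rewrite addrC subrK.
rewrite ipDl lerD2l.
apply: (le_trans (ip_le _ _)); apply: ler_wpM2r => //; exact: hii.
Qed.

Lemma step w d eta S : G w <= 1 -> `|d| = 1 -> 0 < eta ->
  (forall s, 0 <= s -> s <= S -> mu s <= eta / 2) ->
  ip (gradG w) d <= - eta -> forall s, 0 <= s -> s <= S -> G (w + s *: d) <= 1.
Proof.
move=> Gw d1 e0 hmu hd s s0 sS.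
have HD : forall t, exists L, Der (fun s => G (w + s *: d)) t L.
  by move=> t; exists (ip (gradG (w + t *: d)) d); exact: DerG.
apply: (@cont_ind R (fun s => G (w + s *: d)) 0 S 1 (le_trans s0 sS) HD) => //.
  by rewrite scale0r addr0.
move=> t t0 tS Hb.
have Gt : G (w + t *: d) <= 1 := Hb t t0 (lexx t).
have hL : ip (gradG (w + t *: d)) d < 0.
  have := ip_gradB w (w + t *: d) d Gw Gt; rewrite d1 mulr1 (addrC w) addrK normrZ d1 mulr1.
  rewrite ger0_norm // => H1.
  have := hmu t t0 (ltW tS); lra.
have [e e0' He] := Der_neg (DerG w d t) hL.
exists e => // h h0 he; apply: ltW; exact: (lt_le_trans (He h h0 he) Gt).
Qed.

Lemma bd_cl x : boundary [set w | G w <= 1] x ->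
  forall e, 0 < e -> exists y, G y <= 1 /\ `|y - x| < e.
Proof.
move=> [hcl _] e e0.
have : nbhs x (ball x e) by apply/nbhs_ballP; exists e.
move=> /hcl [y [Gy yb]]; exists y; split => //.
by move: yb; rewrite -ball_normE /ball_ /= distrC.
Qed.

Lemma bd_nint x : boundary [set w | G w <= 1] x ->
  forall e, 0 < e -> exists y, 1 < G y /\ `|y - x| < e.
Proof.
move=> [_ hni] e e0.
have [//|H] := pselect (exists y, 1 < G y /\ `|y - x| < e).
exfalso; apply: hni; rewrite /interior /=.
apply/nbhs_ballP; exists e => // y; rewrite -ball_normE /ball_ /= => hy.
rewrite leNgt; apply/negP => hg; apply: H; exists y; split => //.
by rewrite distrC.
Qed.

Lemma level w p : G w <= 1 -> 1 < G p ->
  exists2 s, 0 <= s <= 1 & G (w + s *: (p - w)) = 1.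
Proof.
move=> Gw Gp.
have HD : forall t, exists L, Der (fun s => G (w + s *: (p - w))) t L.
  by move=> t; eexists; exact: DerG.
have := @IVT R (fun s => G (w + s *: (p - w))) 0 1 1 ler01
  (continuous_subspaceT (Der_cont HD)).
rewrite /= scale0r addr0 scale1r addrC subrK.
move=> /(_ _) [].
  by apply/andP; split; [rewrite ge_min Gw | rewrite le_max (ltW Gp) orbT].
by move=> s; rewrite in_itv /= => hs hG; exists s.
Qed.

Lemma mul_le_of_le_div (K t A : R) : 0 < K -> t <= A / K -> K * t <= A.
Proof. by move=> K0; rewrite ler_pdivlMr // mulrC. Qed.

Lemma subX_split (a b m : X) : a - b = (a - m) + (m - b).
Proof. by rewrite addrA subrK. Qed.

Lemma seg_sub (a b : X) (s : R) : a + s *: (b - a) - b = (1 - s) *: (a - b).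
Proof. by rewrite scalerBl scale1r -(opprB a b) scalerN addrAC. Qed.

Lemma Gge1 x : boundary [set w | G w <= 1] x -> 1 <= G x.
Proof.
move=> bx; rewrite leNgt; apply/negP => hlt.
set g := gradG x.
have ng := normr_ge0 g.
have [e0 e00 He0] := mu_small 1 ltr01.
have K0 : 0 < `|g| + 2 by lra.
have m0 : 0 < (1 - G x) / (2 * (`|g| + 2)).
  by apply: divr_gt0; [lra | apply: mulr_gt0].
have [e [e0' ee0 ee1]] := pos_min e00 m0.
have [y [Gy hy]] := bd_nint x bx e e0'.
set v := y - x.
have v0 : 0 < `|v|.
  rewrite normr_gt0; apply/eqP => hv0; move: Gy.
  by rewrite (_ : y = x) ?(subr0_eq hv0) //; lra.
set K := (`|g| + 2) * `|v|.
have KK : K <= (1 - G x) / 2.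
  have : K <= (`|g| + 2) * ((1 - G x) / (2 * (`|g| + 2))).
    by rewrite /K ler_pM2l //; lra.
  rewrite (_ : (`|g| + 2) * ((1 - G x) / (2 * (`|g| + 2))) = (1 - G x) / 2) //.
  by field; rewrite gt_eqF.
have K00 : 0 <= K by rewrite /K mulr_ge0 //; lra.
have HD : forall t, exists L, Der (fun s => G (x + s *: v) - s * K) t L.
  by move=> t; eexists; apply: Der_sub_lin; exact: DerG.
have f0 : G (x + 0 *: v) - 0 * K <= G x by rewrite scale0r addr0 mul0r subr0.
suff stepH : forall t, 0 <= t -> t < 1 ->
    (forall s', 0 <= s' -> s' <= t -> G (x + s' *: v) - s' * K <= G x) ->
    exists2 e : R, 0 < e & forall h, 0 < h -> h < e -> G (x + (t + h) *: v) - (t + h) * K <= G x.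
  have := @cont_ind R (fun s => G (x + s *: v) - s * K) 0 1 (G x) ler01 HD f0 stepH 1 ler01 (lexx 1).
  rewrite scale1r mul1r (_ : x + v = y); last by rewrite /v addrC subrK.
  lra.
move=> t t0 t1 Hb.
have ft := Hb t t0 (lexx t).
have Gt : G (x + t *: v) <= 1.
  have : t * K <= K by rewrite ler_piMl // ltW.
  lra.
have hL : ip (gradG (x + t *: v)) v - K < 0.
  have H1 := ip_le (gradG (x + t *: v)) v.
  have H2 := norm_le_add g (gradG (x + t *: v)).
  have H3 := hii (x + t *: v) x Gt (ltW hlt).
  rewrite (_ : x + t *: v - x = t *: v) in H3; last by rewrite addrAC subrr add0r.
  rewrite normrZ ger0_norm // -/g in H3.
  have H4 : mu (t * `|v|) <= 1.
    apply: He0; first by rewrite mulr_ge0.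
    have : t * `|v| <= `|v| by rewrite ler_piMl // ltW.
    have : `|v| <= e by rewrite /v ltW.
    lra.
  have H5 : `|gradG (x + t *: v)| <= `|g| + 1 by lra.
  have H6 : `|gradG (x + t *: v)| * `|v| <= (`|g| + 1) * `|v| by rewrite ler_pM2r.
  rewrite /K; lra.
have [e' e'0 He'] := Der_neg (Der_sub_lin K (DerG x v t)) hL.
exists e' => // h h0 he; apply: ltW; exact: (lt_le_trans (He' h h0 he) ft).
Qed.

Lemma Gle1 y0 : (forall e, 0 < e -> exists y, G y <= 1 /\ `|y - y0| < e) -> G y0 <= 1.
Proof.
move=> hcl; rewrite leNgt; apply/negP => hgt.
have c8 : 0 < c / 8 by rewrite divr_gt0.
have c4 : 0 < c / 4 by rewrite divr_gt0.
have [s0 s00 Hs0] := mu_small (c / 8) c8.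
have [e0 e00 He0] := mu_small (c / 4) c4.
have e02 : 0 < e0 / 2 by rewrite divr_gt0.
have [z0 [Gz0 hz0]] := hcl (e0 / 2) e02.
have [s1 /andP[s10 s11] Gy] := level z0 y0 Gz0 hgt.
set y := z0 + s1 *: (y0 - z0).
have hyy0 : `|y - y0| < e0 / 2.
  rewrite /y seg_sub normrZ ger0_norm; last by lra.
  have := normr_ge0 (z0 - y0).
  have : (1 - s1) * `|z0 - y0| <= `|z0 - y0| by rewrite ler_piMl //; lra.
  lra.
set h := gradG y.
have hh : c <= `|h| := hi y Gy.
have h0 : 0 < `|h| by lra.
set d := (- `|h|^-1) *: h.
have d1 : `|d| = 1.
  by rewrite /d normrZ normrN normrV ?unitfE ?gt_eqF // normr_id mulVf // gt_eqF.
have hd : ip h d = - `|h|.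
  rewrite /d ipZr ipxx expr2 mulrA mulNr mulVf ?gt_eqF //; lra.
have key : forall s, 0 < s -> s <= (3 / 4) * s0 -> G (y0 + s *: d) <= 1.
  move=> s sp ss.
  have s3 : 0 < s / 3 by rewrite divr_gt0.
  have [e' [e'0 e'1 e'2]] := pos_min e02 s3.
  have [y' [Gy' hy']] := hcl e' e'0.
  set h' := gradG y'.
  have hh' : `|h' - h| <= c / 4.
    have Gyl : G y <= 1 by rewrite /y Gy.
    rewrite /h' /h; apply: (le_trans (hii y' y Gy' Gyl)); apply: He0 => //.
    rewrite (subX_split y' y y0).
    apply: (le_trans (ler_normD _ _)).
    rewrite (distrC y0 y); lra.
  set a := `|y0 - y'|.
  have a0 : 0 <= a := normr_ge0 _.
  have ha : a < s / 3 by rewrite /a distrC; lra.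
  set v := s *: d + (y0 - y').
  set L := `|v|.
  have hL1 : L <= s + a.
    rewrite /L /v; apply: (le_trans (ler_normD _ _)).
    by rewrite normrZ d1 mulr1 gtr0_norm.
  have hL2 : s - a <= L.
    have := norm_le_add v (s *: d).
    rewrite (_ : s *: d - v = - (y0 - y')); last by rewrite /v opprD addrA subrr add0r.
    by rewrite normrN normrZ d1 mulr1 gtr0_norm // -/a -/L; lra.
  have L0 : 0 < L by lra.
  have hv : ip h' v <= - (c / 4) * L.
    rewrite /v ipDr ipZr.
    have H1 : ip h' d <= - `|h| + c / 4.
      have -> : h' = h + (h' - h) by rewrite addrC subrK.
      rewrite ipDl hd.
      have := ip_le (h' - h) d; rewrite d1 mulr1; lra.
    have H2 : ip h' (y0 - y') <= (`|h| + c / 4) * a.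
      apply: (le_trans (ip_le _ _)); rewrite -/a; apply: ler_wpM2r => //.
      have := norm_le_add h h'; lra.
    have P1 : s * ip h' d <= s * (- `|h| + c / 4) by rewrite ler_pM2l.
    have P2 : 0 <= (`|h| + c / 2) * (s / 3 - a) by apply: mulr_ge0; lra.
    have P3 : 0 <= s * (`|h| - c) by apply: mulr_ge0; lra.
    have P4 : - (c / 4) * (s + a) <= - (c / 4) * L by rewrite ler_nM2l; lra.
    nra.
  set d' := L^-1 *: v.
  have d'1 : `|d'| = 1.
    by rewrite /d' normrZ normrV ?unitfE ?gt_eqF // ger0_norm ?invr_ge0 ?ltW // mulVf ?gt_eqF.
  have hd' : ip h' d' <= - (c / 4).
    rewrite /d' ipZr.
    rewrite -(ler_pM2l L0) mulrA mulfV ?gt_eqF // mul1r; lra.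
  have Hmu : forall s, 0 <= s -> s <= s0 -> mu s <= (c / 4) / 2.
    by move=> t t0 t1; rewrite (_ : c / 4 / 2 = c / 8); [exact: Hs0 | field].
  have := step y' d' (c / 4) s0 Gy' d'1 c4 Hmu hd' L (ltW L0) ltac:(lra).
  rewrite /d' scalerA mulfV ?gt_eqF // scale1r /v.
  by rewrite addrCA (addrC y') subrK addrC.
have [K D] : exists K, Der (fun t => G (y0 + t *: d)) 0 K by eexists; exact: DerG.
have [e1 e10 He1] := Der_lip D.
have K0 : 0 < `|K| + 1 by rewrite ltr_wpDl.
have s34 : 0 < (3 / 4) * s0 by rewrite mulr_gt0.
have [t' [t'0 t'1 t'2]] := pos_min (divr_gt0 e10 (ltr0Sn _ 1)) s34.
have gg : 0 < (G y0 - 1) / 2 / (`|K| + 1) by rewrite !divr_gt0 //; lra.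
have [t [t0 t1 t2]] := pos_min t'0 gg.
have := key t t0 ltac:(lra).
have := He1 t; rewrite gtr0_norm // add0r scale0r addr0 => /(_ ltac:(lra)).
have := mul_le_of_le_div _ _ _ K0 t2.
rewrite ler_norml => Kt /andP[H1 _] H2.
lra.
Qed.

Lemma sub_addK (a u : X) : a - (a + u) = - u.
Proof. by rewrite opprD addrA subrr add0r. Qed.

Lemma weak x z : boundary [set w | G w <= 1] x -> G z <= 1 ->
  ip (gradG x) (z - x) <= lambda * `|z - x| ^+ 2.
Proof.
move=> bx Gz.
set v := z - x; set g := gradG x; set k := lambda * `|v| ^+ 2.
rewrite leNgt; apply/negP => hb.
have k0 : 0 <= k by rewrite /k mulr_ge0 // ?ltW // sqr_ge0.
have HD : forall t, Der (fun s => G (x + (1 - s) *: v)) t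
                         (- ip (gradG (x + (1 - t) *: v)) v).
  by move=> t; exact: (Der_comp_opp (DerG x v (1 - t))).
have HD' : forall t, exists L, Der (fun s => G (x + (1 - s) *: v)) t L.
  by move=> t; eexists; exact: HD.
have f0 : G (x + (1 - 0) *: v) <= 1.
  by rewrite subr0 scale1r /v addrC subrK.
have stepH : forall t, 0 <= t -> t < 1 ->
    (forall s', 0 <= s' -> s' <= t -> G (x + (1 - s') *: v) <= 1) ->
    exists2 e : R, 0 < e & forall h, 0 < h -> h < e -> G (x + (1 - (t + h)) *: v) <= 1.
  move=> t t0 t1 Hb.
  have Gw := Hb t t0 (lexx t).
  set w := x + (1 - t) *: v.
  have H := hiii x w bx Gw.
  have t1' : 0 <= 1 - t by lra.
  rewrite /w sub_addK ipNr ipBl !ipZr normrN normrZ (ger0_norm t1') in H.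
  rewrite -/w -/g in H.
  have hL : - ip (gradG w) v < 0.
    set q := ip (gradG w) v in H *.
    set b := ip g v in hb H.
    have t10 : 0 < 1 - t by lra.
    have E : (1 - t) * (b - q - lambda * (1 - t) * `|v| ^+ 2) <= 0.
      move: H; rewrite exprMn !expr2; nra.
    have E2 : b - q - lambda * (1 - t) * `|v| ^+ 2 <= 0.
      by move: E; rewrite pmulr_rle0.
    have E3 : lambda * (1 - t) * `|v| ^+ 2 <= k.
      rewrite /k -mulrA ler_pM2l // ler_piMl ?sqr_ge0 //; lra.
    lra.
  have [e e0 He] := Der_neg (HD t) hL.
  exists e => // h h0 he; apply: ltW; exact: (lt_le_trans (He h h0 he) Gw).
have all1 := @cont_ind R (fun s => G (x + (1 - s) *: v)) 0 1 1 ler01 HD' f0 stepH.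
have Gx1 := Gge1 x bx.
have b0 : 0 < ip (gradG (x + 0 *: v)) v by rewrite scale0r addr0 -/g; lra.
have [e e0 He] := Der_pos (DerG x v 0) b0.
have [h [h0 h1 h2]] := pos_min (divr_gt0 e0 (ltr0Sn _ 1)) (@ltr01 R).
have := all1 (1 - h) ltac:(lra) ltac:(lra).
have [+ _] := He h h0 ltac:(lra).
rewrite add0r scale0r addr0 (_ : 1 - (1 - h) = h); last by ring.
lra.
Qed.

Lemma normD2 (a b : X) : `|a + b| ^+ 2 = `|a| ^+ 2 + 2 * ip a b + `|b| ^+ 2.
Proof. rewrite -!ipxx ipDl !ipDr (ipC b a); ring. Qed.

Lemma normB2 (a b : X) : `|a - b| ^+ 2 = `|a| ^+ 2 - 2 * ip a b + `|b| ^+ 2.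
Proof. by rewrite normD2 ipNr normrN; ring. Qed.

Lemma unit_norm (a : X) : a != 0 -> Num.norm (`|a|^-1 *: a) = 1.
Proof.
move=> a0; have n0 : 0 < `|a| by rewrite normr_gt0.
by rewrite normrZ normrV ?unitfE ?gt_eqF // normr_id mulVf ?gt_eqF.
Qed.

Lemma final_contra x w' r' D p :
  boundary [set w | G w <= 1] x -> G w' = 1 -> c <= `|gradG x| ->
  0 < r' -> lambda * r' < c -> 0 < D ->
  p = x + (r' / `|gradG x|) *: gradG x ->
  0 < `|p - w'| -> `|p - w'| <= r' - D / 2 ->
  Num.norm (`|p - w'|^-1 *: (p - w') - `|gradG w'|^-1 *: gradG w')
     < (1 - lambda * r' / c) * (D / (2 * r')) ^+ 2 -> False.
Proof.
move=> bx Gw' hgc r0 lr D0 hp d0 dle hth.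
have hmc : c <= `|gradG w'| := hi w' Gw'.
have Gw'l : G w' <= 1 by rewrite Gw'.
have W := weak x w' bx Gw'l.
have H3 := hiii x w' bx Gw'l.
set g := gradG x in hgc hp hth W H3 *.
set h := gradG w' in hmc hth H3 *.
set e := p - w' in d0 dle hth *.
set u := w' - x in W.
rewrite (_ : x - w' = - u) ?ipNr ?ipBl ?normrN in H3; last by rewrite opprB.
have Geu : e + u = (r' / `|g|) *: g by rewrite /e /u addrA subrK hp addrAC subrr add0r.
have gm0 : 0 < `|g| := lt_le_trans hc hgc.
have hm0 : 0 < `|h| := lt_le_trans hc hmc.
have neu : `|e + u| = r'.
  by rewrite Geu normrZ ger0_norm ?divr_ge0 ?ltW // divfK // gt_eqF.
have gE : g = (`|g| / r') *: (e + u).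
  by rewrite Geu scalerA mulrA divfK ?gt_eqF // divff ?gt_eqF // scale1r.
have ipgu : ip g u = `|g| / r' * (ip e u + `|u| ^+ 2).
  by rewrite {1}gE ipZl ipDl ipxx.
have AU : 2 * (ip e u + `|u| ^+ 2) = r' ^+ 2 + `|u| ^+ 2 - `|e| ^+ 2.
  by rewrite -neu (normD2 e u); ring.
have ue : r' <= `|e| + `|u| by rewrite -neu ler_normD.
have eh : Num.norm (`|e|^-1 *: e) = 1 by apply: unit_norm; rewrite -normr_gt0.
have hh1 : h = `|h| *: (`|h|^-1 *: h) by rewrite scalerA divff ?gt_eqF // scale1r.
have iphu : ip h u = `|h| * ip (`|h|^-1 *: h) u by rewrite {1}hh1 ipZl.
have ipeu : ip (`|e|^-1 *: e) u = `|e|^-1 * ip e u by rewrite ipZl.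
have split1 : ip (`|h|^-1 *: h) u = ip (`|e|^-1 *: e) u - ip (`|e|^-1 *: e - `|h|^-1 *: h) u.
  by rewrite ipBl; ring.
have cs := ip_ge (`|e|^-1 *: e - `|h|^-1 *: h) u.
have := real_final hc hl r0 lr D0 (normr_ge0 u) d0 hgc hmc (normr_ge0 _) ipgu AU ue iphu ipeu split1 cs W H3 hth dle. by [].
Qed.

Lemma main_ineq x z : boundary [set w | G w <= 1] x -> G z <= 1 ->
  0 <= ip (gradG x) (x - z) + `|gradG x| / (2 * (c / lambda)) * `|x - z| ^+ 2.
Proof.
move=> bx Gz.
have Gx : G x = 1.
  by apply/eqP; rewrite eq_le (Gle1 x (bd_cl x bx)) (Gge1 x bx).
have hgc := hi x Gx.
have gm0 : 0 < `|gradG x| := lt_le_trans hc hgc.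
rewrite leNgt; apply/negP => hneg.
have ipE : ip (gradG x) (x - z) = - ip (gradG x) (z - x) by rewrite -ipNr opprB.
rewrite ipE (distrC x z) in hneg.
move: hneg.
set g := gradG x in hgc gm0 ipE *.
set v := z - x.
set b := ip g v.
set gm := `|g| in hgc gm0 *.
set nv := `|v|.
move=> hneg.
have r0 : 0 < c / lambda by rewrite divr_gt0.
move: hneg r0; set r := c / lambda => hneg r0.
have rE : r = c / lambda by [].
clearbody r.
have nv0 : 0 <= nv := normr_ge0 v.
have key1 : gm * nv ^+ 2 < b * (2 * r).
  rewrite -ltr_pdivrMr ?mulr_gt0 //.
  have -> : gm * nv ^+ 2 / (2 * r) = gm / (2 * r) * nv ^+ 2 by rewrite mulrAC.
  lra.
have b0 : 0 < b.
  have : 0 <= gm * nv ^+ 2 by rewrite mulr_ge0 ?sqr_ge0 // ltW.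
  have := r0; nra.
pose r0' := gm * nv ^+ 2 / (2 * b).
have r0'0 : 0 <= r0' by rewrite /r0' divr_ge0 ?mulr_ge0 ?sqr_ge0 // ltW.
have r0'r : r0' < r.
  rewrite /r0' ltr_pdivrMr ?mulr_gt0 //; lra.
pose r' := (r0' + r) / 2.
have r'0 : 0 < r' by rewrite /r'; lra.
have r'r : r' < r by rewrite /r'; lra.
have lr : lambda * r' < c.
  have : lambda * r' < lambda * r by rewrite ltr_pM2l.
  have : lambda * r = c by rewrite rE mulrCA divff ?gt_eqF // mulr1.
  lra.
have key2 : gm * nv ^+ 2 < 2 * r' * b.
  have : r0' * (2 * b) < r' * (2 * b) by rewrite ltr_pM2r ?mulr_gt0 //; rewrite /r'; lra.
  rewrite /r0' divfK ?gt_eqF ?mulr_gt0 //; lra.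
pose p := x + (r' / gm) *: g.
have hp : p = x + (r' / `|gradG x|) *: gradG x by [].
have px : p - x = (r' / gm) *: g by rewrite /p addrAC subrr add0r.
have npx : `|p - x| = r'.
  rewrite px normrZ ger0_norm ?divr_ge0 ?ltW // -/gm; first by apply: divfK; rewrite gt_eqF.
  by rewrite /r'; lra.
have zp : `|z - p| < r'.
  have E : z - p = v - (r' / gm) *: g by rewrite /v /p opprD addrA.
  have : `|z - p| ^+ 2 < r' ^+ 2.
    rewrite E normB2 ipZr (ipC v g) -/b -px npx -/nv.
    have : nv ^+ 2 < 2 * (r' / gm * b).
      rewrite -(ltr_pM2l gm0).
      have -> : gm * (2 * (r' / gm * b)) = 2 * r' * b by field; rewrite gt_eqF.
      lra.
    lra.
  by move=> H; rewrite -(ltr_pXn2r (ltn0Sn 1)) ?nnegrE ?normr_ge0 ?ltW.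

have [Gp|Gp] := leP (G p) 1.
  have H := weak x p bx Gp.
  rewrite npx px ipZr ipxx -/gm in H.
  have E : r' / gm * gm ^+ 2 = r' * gm by rewrite expr2 mulrA divfK ?gt_eqF.
  rewrite E in H.
  have : gm <= lambda * r'.
    by rewrite -(ler_pM2l r'0); move: H; rewrite expr2 mulrCA.
  lra.
pose S := [set t | exists2 w, G w <= 1 & t = `|w - p|].
have hinf : has_inf S.
  split; first by exists `|z - p|; exists z.
  by exists 0 => t [w _ ->].
pose Ds := inf S.
have Dlb : forall w, G w <= 1 -> Ds <= `|w - p|.
  by move=> w Gw; apply: (ge_inf hinf.2); exists w.
have Dz : Ds < r' := le_lt_trans (Dlb z Gz) zp.
have Dpos : 0 < Ds.
  rewrite ltNge; apply/negP => D0.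
  have : G p <= 1.
    apply: Gle1 => e e0.
    have [t [w Gw ->] tl] := inf_adherent e0 hinf.
    exists w; split => //; rewrite -/Ds in tl; lra.
  lra.
pose D := r' - Ds.
have D0 : 0 < D by rewrite /D; lra.
pose th := (1 - lambda * r' / c) * (D / (2 * r')) ^+ 2.
have tau0 : 0 < 1 - lambda * r' / c.
  have : lambda * r' / c < 1 by rewrite ltr_pdivrMr // mul1r.
  lra.
have th0 : 0 < th by rewrite /th mulr_gt0 // exprn_gt0 // divr_gt0 // mulr_gt0.
pose eta := c * th / 2.
have eta0 : 0 < eta by rewrite /eta divr_gt0 // mulr_gt0.
have [s0 s00 Hs0] := mu_small (eta / 2) (divr_gt0 eta0 (ltr0Sn _ 1)).
have [sg [sg0 sg1 sg2]] := pos_min s00 (divr_gt0 (mulr_gt0 Dpos th0) (ltr0Sn _ 1)).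
have [ep1 [ep10 ep11 ep12]] := pos_min (divr_gt0 D0 (ltr0Sn _ 1)) (divr_gt0 Dpos (ltr0Sn _ 1)).
have [ep [ep0 ep1l ep2]] := pos_min ep10 (divr_gt0 (mulr_gt0 sg0 th0) (ltr0Sn _ 7)).
have [t [w Gw tE] tl] := inf_adherent ep0 hinf.
rewrite -/Ds tE in tl.
have [s1 /andP[s10 s11] Gw'] := level w p Gw Gp.
set w' := w + s1 *: (p - w) in Gw'.
have Gw'l : G w' <= 1 by rewrite Gw'.
have dle : `|p - w'| <= `|w - p|.
  rewrite distrC /w' seg_sub normrZ ger0_norm; last by lra.
  rewrite ler_piMl //; lra.
have dge : Ds <= `|p - w'| by rewrite distrC; exact: Dlb.
have d0 : 0 < `|p - w'| by lra.
have DE : D = r' - Ds by [].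
have dle2 : `|p - w'| <= r' - D / 2 by lra.
apply: (final_contra x w' r' D p bx Gw' hgc r'0 lr D0 hp d0 dle2).
rewrite -/th ltNge; apply/negP => hbig.
have hm0 : 0 < `|gradG w'| := lt_le_trans hc (hi w' Gw').
have hmc : c <= `|gradG w'| := hi w' Gw'.
move: hbig hm0 hmc d0 dge dle.
set e := p - w'.
set h := gradG w'.
move=> hbig hm0 hmc d0 dge dle.
have e0 : e != 0 by rewrite -normr_gt0.
have h0 : h != 0 by rewrite -normr_gt0.
set eh := `|e|^-1 *: e in hbig.
set hh := `|h|^-1 *: h in hbig.
have neh : `|eh| = 1 := unit_norm e e0.
have nhh : `|hh| = 1 := unit_norm h h0.
set dd := eh - hh in hbig.
have m0 : 0 < `|dd| := lt_le_trans th0 hbig.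
have ipeh : ip eh hh = 1 - `|dd| ^+ 2 / 2.
  have nb := normB2 eh hh; rewrite -/dd neh nhh expr1n in nb.
  by rewrite nb; field.
set dh := `|dd|^-1 *: dd.
have ndh : `|dh| = 1 by apply: unit_norm; rewrite -normr_gt0.
have hE : h = `|h| *: hh by rewrite /hh scalerA divff ?gt_eqF // scale1r.
have eE : e = `|e| *: eh by rewrite /eh scalerA divff ?gt_eqF // scale1r.
have iphdh : ip h dh = - (`|h| * `|dd| / 2).
  have ip_h_hh : ip h hh = `|h| by rewrite /hh ipZr ipxx expr2 mulKf ?gt_eqF.
  have ip_h_eh : ip h eh = `|h| * ip eh hh by rewrite {1}hE ipZl ipC.
  rewrite /dh ipZr /dd ipBr ip_h_eh ip_h_hh ipeh.
  by field; rewrite ?gt_eqF.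
have iphdh2 : ip h dh <= - eta.
  rewrite iphdh /eta.
  have : c * th <= `|h| * `|dd| by rewrite ler_pM // ltW.
  lra.
have Gs := step w' dh eta s0 Gw'l ndh eta0 Hs0 iphdh2 sg (ltW sg0) sg1.
have Dn := Dlb _ Gs.
have eqv : w' + sg *: dh - p = sg *: dh - e by rewrite /e opprB addrAC addrC.
rewrite eqv in Dn.
have ipdhe : ip dh e = `|e| * `|dd| / 2.
  have ip_eh_e : ip eh e = `|e| by rewrite /eh ipZl ipxx expr2 mulKf ?gt_eqF.
  have ip_hh_e : ip hh e = `|e| * ip eh hh by rewrite {1}eE ipZr ipC.
  rewrite /dh ipZl /dd ipBl ip_eh_e ip_hh_e ipeh.
  by field; rewrite ?gt_eqF.
have nE : `|sg *: dh - e| ^+ 2 = sg ^+ 2 - 2 * (sg * (`|e| * `|dd| / 2)) + `|e| ^+ 2.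
  by rewrite normB2 ipZl ipdhe normrZ ndh mulr1 ger0_norm // ltW.
have tl2 : `|e| < Ds + ep by rewrite /e; lra.
exact: (real_kkt Dpos dge tl2 ep0 (le_trans ep1l ep12) sg0 sg2 ep2 hbig th0 Dn nE).
Qed.

End Main.

Theorem lemma1p5 (R : realType) (X : completeNormedModType R)
  (ip : X -> X -> R) (G : X -> R) (gradG : X -> X)
  (lambda c : R) (mu : R -> R) :
  is_hilbert_inner ip ->
  (forall x, 0 <= G x) ->
  (forall x, is_gradient ip G x (gradG x)) ->
  0 < lambda -> 0 < c ->
  {within `[0, +oo[, continuous mu} ->
  {in `[0, +oo[ &, {homo mu : s t / s <= t}} ->
  (forall s, 0 <= s -> 0 <= mu s) ->
  mu 0 = 0 ->
  mu x @[x --> +oo] --> +oo ->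
  (forall x, G x = 1 -> c <= `|gradG x|) ->
  (forall x y, G x <= 1 -> G y <= 1 ->
     `|gradG x - gradG y| <= mu `|x - y|) ->
  (forall x z, boundary [set w | G w <= 1] x -> G z <= 1 ->
     ip (gradG x - gradG z) (x - z) >= - lambda * `|x - z| ^+ 2) ->
  let r := c / lambda in
  forall x z, boundary [set w | G w <= 1] x -> G z <= 1 ->
    0 <= ip (gradG x) (x - z) + `|gradG x| / (2 * r) * `|x - z| ^+ 2.
Proof.
move=> hip hG0 hgrad hl hc hmuc hmono hmupos hmu0 hmuinf hi hii hiii r x z bx Gz.
rewrite /r.
by apply: main_ineq.
Qed.
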